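(* Let $\epsilon,A\in\mathbb{R}$ with $\epsilon\neq0$, $A\neq 0$, and let $f:\mathbb{R}^4\to\mathbb{R}^4$ be $$f(x,y,z,w)=\Big(y,\,z,\,w,\,-x-\tfrac{1}{A}y+\tfrac{2}{A}z-\tfrac{1}{\epsilon A}z^3-\tfrac{1}{A}w\Big).$$ Then the non-wandering set of $f$ is contained in the cube $[-R,R]^4$, where $R=\sqrt{|\epsilon A|\big(2+\tfrac{4}{|A|}\big)}$.
   Context: The non-wandering set of $f$ is the set of points $q$ such that for every neighbourhood $U$ of $q$ there is $k\geq1$ with $f^k(U)\cap U\neq\emptyset$. *)

(* Defs.v *)
From Stdlib Require Import Reals.
Open Scope R_scope.

Definition R4 : Type := (R * R * R * R)%type.

(* Sup-norm distance on R^4 (induces the standard topology). *)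
Definition dist4 (p q : R4) : R :=
  let '(a1, a2, a3, a4) := p in
  let '(b1, b2, b3, b4) := q in
  Rmax (Rmax (Rabs (a1 - b1)) (Rabs (a2 - b2))) (Rmax (Rabs (a3 - b3)) (Rabs (a4 - b4))).

Definition nbhd4 (q : R4) (U : R4 -> Prop) : Prop :=
  exists r, 0 < r /\ forall p, dist4 p q < r -> U p.

Fixpoint iter4 (f : R4 -> R4) (k : nat) (p : R4) : R4 :=
  match k with
  | O => p
  | S k' => f (iter4 f k' p)
  end.

Definition nonwandering (f : R4 -> R4) (q : R4) : Prop :=
  forall U : R4 -> Prop, nbhd4 q U ->
    exists k : nat, (1 <= k)%nat /\ exists p, U p /\ U (iter4 f k p).

Definition fmap (eps A : R) (p : R4) : R4 :=
  let '(x, y, z, w) := p in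
  (y, z, w, - x - (1 / A) * y + (2 / A) * z - (1 / (eps * A)) * z ^ 3 - (1 / A) * w).

Definition in_cube (R0 : R) (p : R4) : Prop :=
  let '(x, y, z, w) := p in
  -R0 <= x <= R0 /\ -R0 <= y <= R0 /\ -R0 <= z <= R0 /\ -R0 <= w <= R0.

(* Main.v *)
Require Import Defs.
From Stdlib Require Import Reals Lra Psatz.
Open Scope R_scope.

Definition good (eps A K T s d : R) : Prop :=
  eps <> 0 /\ A <> 0 /\ K = Rabs eps * (2*Rabs A + 4) /\ 0 <= T /\ K <= 3*T^2 /\
  0 <= s /\ 0 <= d /\ d <= s /\
  Rabs eps * Rabs A * d <= T*(T^2-K) - Rabs eps*(Rabs A+2)*s.

Lemma core eps A K T s d x y v1 v2 v3 :
  good eps A K T s d -> T <= Rabs v2 -> Rabs y <= Rabs v2 + s ->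
  Rabs v1 <= Rabs v2 + s -> Rabs v3 <= Rabs v2 + s ->
  eps*A*x + eps*A*y + eps*v1 - 2*eps*v2 + v2^3 + eps*v3 = 0 ->
  Rabs v2 + d <= Rabs x.
Proof.
  intros (he & hA & hK & hT0 & hK3 & hs & hd & hds & hmarg) hT hy h1 h3 hrel.
  assert (hE : 0 < Rabs eps) by (apply Rabs_pos_lt; auto).
  assert (hB : 0 < Rabs A) by (apply Rabs_pos_lt; auto).
  assert (h3eq : v2^3 = - (eps * (A*x + A*y + v1 + (-(2*v2)) + v3))) by lra.
  assert (habs : Rabs v2 ^3 = Rabs eps * Rabs (A*x + A*y + v1 + (-(2*v2)) + v3)).
  { rewrite RPow_abs, h3eq, Rabs_Ropp, Rabs_mult. reflexivity. }
  pose proof (Rabs_triang (A*x + A*y + v1 + (-(2*v2))) v3).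
  pose proof (Rabs_triang (A*x + A*y + v1) (-(2*v2))).
  pose proof (Rabs_triang (A*x + A*y) v1).
  pose proof (Rabs_triang (A*x) (A*y)).
  rewrite Rabs_Ropp, Rabs_mult in *. rewrite !Rabs_mult in *.
  replace (Rabs 2) with 2 in * by (rewrite Rabs_right; lra).
  set (t := Rabs v2) in *.
  assert (hx0 := Rabs_pos x).
  assert (hy0 := Rabs_pos y).
  assert (key : t^3 <= Rabs eps * (Rabs A * Rabs x + Rabs A * (t+s) + (t+s) + 2*t + (t+s))).
  { rewrite habs. apply Rmult_le_compat_l; [lra|].
    assert (Rabs A * Rabs y <= Rabs A * (t+s)) by (apply Rmult_le_compat_l; lra).
    lra. }
  assert (hpoly : T*(T^2-K) <= t*(t^2-K)).
  { assert (h1' : 0 <= t - T) by lra.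
    assert (h2' : 0 <= t^2 + t*T + T^2 - K) by nra.
    pose proof (Rmult_le_pos _ _ h1' h2'). nra. }
  apply (Rmult_le_reg_l (Rabs eps * Rabs A)); [nra|].
  subst K. nra.
Qed.

Definition ef (eps A a b c dd : R) : R :=
  - a - (1 / A) * b + (2 / A) * c - (1 / (eps * A)) * c ^ 3 - (1 / A) * dd.

Lemma fmap_eq eps A a b c dd : fmap eps A (a,b,c,dd) = (b,c,dd, ef eps A a b c dd).
Proof. reflexivity. Qed.

Lemma rel eps A a b c dd : eps <> 0 -> A <> 0 ->
  eps*A*(ef eps A a b c dd) + eps*A*a + eps*b - 2*eps*c + c^3 + eps*dd = 0.
Proof. intros. unfold ef. field. auto. Qed.

Definition Mp (p : R4) : R := match p with (a,b,c,d) => Rmax (Rabs c) (Rabs d) end.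
Definition Ap (p : R4) : R := match p with (a,b,c,d) => Rmax (Rabs a) (Rabs b) end.
Definition Hf T s p := T <= Mp p /\ Ap p <= Mp p + s.
Definition Hb T s p := T <= Ap p /\ Mp p <= Ap p + s.

Ltac mx := unfold Rmax in *; repeat match goal with |- context [Rle_dec ?a ?b] => destruct (Rle_dec a b) end;
  repeat match goal with H : context [Rle_dec ?a ?b] |- _ => destruct (Rle_dec a b) end.

Lemma fwd1 eps A K T s d p : good eps A K T s d -> Hf T s p ->
  Hf T s (fmap eps A p) /\ Mp p <= Mp (fmap eps A p).
Proof.
  intros G. pose proof G as (_&_&_&_&_&hs0&hd0&hds0&_). destruct p as [[[a b] c] dd]. rewrite fmap_eq. unfold Hf, Mp, Ap.
  intros [H1 H2].
  pose proof (rel eps A a b c dd (proj1 G) (proj1 (proj2 G))).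
  destruct (Rle_dec (Rabs dd) (Rabs c)).
  - assert (Rabs c + d <= Rabs (ef eps A a b c dd)).
    { apply (core eps A K T s d _ a b c dd G); try mx; lra. }
    try mx; lra.
  - try mx; lra.
Qed.

Lemma fwd2 eps A K T s d p : good eps A K T s d -> Hf T s p ->
  Mp p + d <= Mp (fmap eps A (fmap eps A p)).
Proof.
  intros G. pose proof G as (_&_&_&_&_&hs0&hd0&hds0&_). destruct p as [[[a b] c] dd]. rewrite !fmap_eq. unfold Hf, Mp, Ap.
  intros [H1 H2].
  pose proof (rel eps A a b c dd (proj1 G) (proj1 (proj2 G))).
  pose proof (rel eps A b c dd (ef eps A a b c dd) (proj1 G) (proj1 (proj2 G))).
  set (e := ef eps A a b c dd) in *.
  set (g := ef eps A b c dd e) in *.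
  destruct (Rle_dec (Rabs dd) (Rabs c)).
  - assert (Rabs c + d <= Rabs e).
    { apply (core eps A K T s d _ a b c dd G); try mx; lra. }
    try mx; lra.
  - destruct (Rle_dec (Rabs dd + s) (Rabs e)).
    + try mx; lra.
    + assert (Rabs dd + d <= Rabs g).
      { apply (core eps A K T s d _ b c dd e G); try mx; lra. }
      try mx; lra.
Qed.

Lemma bwd1 eps A K T s d p : good eps A K T s d -> Hb T s (fmap eps A p) ->
  Hb T s p /\ Ap (fmap eps A p) <= Ap p.
Proof.
  intros G. pose proof G as (_&_&_&_&_&hs0&hd0&hds0&_). destruct p as [[[a b] c] dd]. rewrite fmap_eq. unfold Hb, Mp, Ap.
  intros [H1 H2].
  pose proof (rel eps A a b c dd (proj1 G) (proj1 (proj2 G))).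
  set (e := ef eps A a b c dd) in *.
  destruct (Rle_dec (Rabs c) (Rabs b)).
  - try mx; lra.
  - assert (Rabs c + d <= Rabs a).
    { apply (core eps A K T s d _ e dd c b G); try mx; lra. }
    try mx; lra.
Qed.

Lemma bwd2 eps A K T s d p : good eps A K T s d -> Hb T s (fmap eps A (fmap eps A p)) ->
  Ap (fmap eps A (fmap eps A p)) + d <= Ap p.
Proof.
  intros G. pose proof G as (_&_&_&_&_&hs0&hd0&hds0&_). destruct p as [[[a b] c] dd]. rewrite !fmap_eq. unfold Hb, Mp, Ap.
  intros [H1 H2].
  pose proof (rel eps A a b c dd (proj1 G) (proj1 (proj2 G))).
  pose proof (rel eps A b c dd (ef eps A a b c dd) (proj1 G) (proj1 (proj2 G))).
  set (e := ef eps A a b c dd) in *.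
  set (g := ef eps A b c dd e) in *.
  destruct (Rle_dec (Rabs dd) (Rabs c)).
  - destruct (Rle_dec (Rabs c + s) (Rabs b)).
    + try mx; lra.
    + assert (Rabs c + d <= Rabs a).
      { apply (core eps A K T s d _ e dd c b G); try mx; lra. }
      try mx; lra.
  - assert (Rabs dd + d <= Rabs b).
    { apply (core eps A K T s d _ g e dd c G); try mx; lra. }
    try mx; lra.
Qed.

Lemma iter_S_r f n p : iter4 f (S n) p = iter4 f n (f p).
Proof. revert p. induction n; intros p; [reflexivity|]. simpl in *. rewrite <- IHn. reflexivity. Qed.

Lemma fwd_iter eps A K T s d p : good eps A K T s d -> Hf T s p ->
  forall n, Hf T s (iter4 (fmap eps A) n p) /\ Mp p <= Mp (iter4 (fmap eps A) n p).
Proof.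
  intros G H n. induction n as [|n IH]; simpl.
  - split; [auto | lra].
  - destruct IH as [IH1 IH2]. destruct (fwd1 eps A K T s d _ G IH1). split; [auto|lra].
Qed.

Lemma fwd_strict eps A K T s d p : good eps A K T s d -> Hf T s p ->
  forall n, Mp p + d <= Mp (iter4 (fmap eps A) (S (S n)) p).
Proof.
  intros G H n. rewrite !iter_S_r.
  pose proof (fwd2 eps A K T s d p G H).
  destruct (fwd1 eps A K T s d p G H) as [H1 _].
  destruct (fwd1 eps A K T s d _ G H1) as [H2 _].
  destruct (fwd_iter eps A K T s d _ G H2 n). lra.
Qed.

Lemma bwd_iter eps A K T s d : good eps A K T s d -> forall n p,
  Hb T s (iter4 (fmap eps A) n p) -> Hb T s p /\ Ap (iter4 (fmap eps A) n p) <= Ap p.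
Proof.
  intros G n. induction n as [|n IH]; intros p H.
  - simpl in *. split; [auto|lra].
  - rewrite iter_S_r in *. destruct (IH _ H) as [H1 H2].
    destruct (bwd1 eps A K T s d p G H1). split; [auto|lra].
Qed.

Lemma bwd_strict eps A K T s d p : good eps A K T s d -> forall n,
  Hb T s (iter4 (fmap eps A) (S (S n)) p) -> Ap (iter4 (fmap eps A) (S (S n)) p) + d <= Ap p.
Proof.
  intros G n H. rewrite !iter_S_r in *.
  destruct (bwd_iter eps A K T s d G n _ H) as [H1 H2].
  pose proof (bwd2 eps A K T s d p G H1). lra.
Qed.

Lemma abs_close x y r : Rabs (x - y) < r -> Rabs y < Rabs x + r /\ Rabs x < Rabs y + r.
Proof. unfold Rabs; repeat destruct Rcase_abs; intros; split; lra. Qed.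

Lemma close_ApMp p q1 q2 q3 q4 r : dist4 p (q1,q2,q3,q4) < r ->
  Rmax (Rabs q1) (Rabs q2) < Ap p + r /\ Ap p < Rmax (Rabs q1) (Rabs q2) + r /\
  Rmax (Rabs q3) (Rabs q4) < Mp p + r /\ Mp p < Rmax (Rabs q3) (Rabs q4) + r.
Proof.
  destruct p as [[[a b] c] dd]. unfold dist4, Ap, Mp. intros H.
  assert (h1 : Rabs (a - q1) < r) by (eapply Rle_lt_trans; [|exact H]; eapply Rle_trans; [apply Rmax_l|apply Rmax_l]).
  assert (h2 : Rabs (b - q2) < r) by (eapply Rle_lt_trans; [|exact H]; eapply Rle_trans; [apply Rmax_r|apply Rmax_l]).
  assert (h3 : Rabs (c - q3) < r) by (eapply Rle_lt_trans; [|exact H]; eapply Rle_trans; [apply Rmax_l|apply Rmax_r]).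
  assert (h4 : Rabs (dd - q4) < r) by (eapply Rle_lt_trans; [|exact H]; eapply Rle_trans; [apply Rmax_r|apply Rmax_r]).
  apply abs_close in h1, h2, h3, h4.
  pose proof (Rmax_l (Rabs a) (Rabs b)). pose proof (Rmax_r (Rabs a) (Rabs b)).
  pose proof (Rmax_l (Rabs c) (Rabs dd)). pose proof (Rmax_r (Rabs c) (Rabs dd)).
  pose proof (Rmax_l (Rabs q1) (Rabs q2)). pose proof (Rmax_r (Rabs q1) (Rabs q2)).
  pose proof (Rmax_l (Rabs q3) (Rabs q4)). pose proof (Rmax_r (Rabs q3) (Rabs q4)).
  repeat split; apply Rmax_lub_lt; lra.
Qed.

Lemma dist4_parts a b c dd q1 q2 q3 q4 r : dist4 (a,b,c,dd) (q1,q2,q3,q4) < r ->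
  Rabs (a - q1) < r /\ Rabs (b - q2) < r /\ Rabs (c - q3) < r /\ Rabs (dd - q4) < r.
Proof.
  unfold dist4. intros H.
  repeat split; (eapply Rle_lt_trans; [|exact H]).
  - eapply Rle_trans; [apply Rmax_l|apply Rmax_l].
  - eapply Rle_trans; [apply Rmax_r|apply Rmax_l].
  - eapply Rle_trans; [apply Rmax_l|apply Rmax_r].
  - eapply Rle_trans; [apply Rmax_r|apply Rmax_r].
Qed.

Lemma near_fixed eps A K R0 m p q1 q2 q3 q4 r : eps <> 0 -> A <> 0 ->
  K = Rabs eps * (2*Rabs A + 4) -> 0 <= R0 -> R0 * R0 = K -> 3*r <= m - R0 ->
  r * (2*Rabs A + 1) <= R0 -> m = Rmax (Rmax (Rabs q1) (Rabs q2)) (Rmax (Rabs q3) (Rabs q4)) ->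
  dist4 p (q1,q2,q3,q4) < r -> dist4 (fmap eps A p) (q1,q2,q3,q4) < r -> False.
Proof.
  intros he hA hK hR0 hR0K h3r hr hm. destruct p as [[[a b] c] dd]. rewrite fmap_eq.
  intros H1 H2.
  pose proof (rel eps A a b c dd he hA) as hrel.
  set (e := ef eps A a b c dd) in *.
  apply dist4_parts in H1, H2.
  destruct H1 as (x1&x2&x3&x4). destruct H2 as (y1&y2&y3&y4).
  apply Rabs_def2 in x1, x2, x3, x4, y1, y2, y3, y4.
  assert (hE : 0 < Rabs eps) by (apply Rabs_pos_lt; auto).
  assert (hB : 0 < Rabs A) by (apply Rabs_pos_lt; auto).
  assert (hc : m < Rabs c + 3*r).
  { rewrite hm.
    assert (Rabs q1 < Rabs c + 3*r) by (refine (proj1 (abs_close c q1 (3*r) _)); apply Rabs_def1; lra).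
    assert (Rabs q2 < Rabs c + 3*r) by (refine (proj1 (abs_close c q2 (3*r) _)); apply Rabs_def1; lra).
    assert (Rabs q3 < Rabs c + 3*r) by (refine (proj1 (abs_close c q3 (3*r) _)); apply Rabs_def1; lra).
    assert (Rabs q4 < Rabs c + 3*r) by (refine (proj1 (abs_close c q4 (3*r) _)); apply Rabs_def1; lra).
    repeat apply Rmax_lub_lt; lra. }
  assert (hcc : Rabs c * Rabs c = c * c) by (rewrite <- Rabs_mult; apply Rabs_right; nra).
  assert (hcK : K < c * c) by nra.
  assert (hEA : - (Rabs eps * Rabs A) <= eps * A).
  { rewrite <- Rabs_mult. pose proof (Rle_abs (-(eps*A))) as HH. rewrite Rabs_Ropp in HH. lra. }
  assert (hY : 4 * Rabs eps < c * c + 2 * eps * A) by nra.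
  set (X := A*(e-c) + A*(a-c) + (b-c) + (dd-c)).
  assert (hX : Rabs X < (8 * Rabs A + 4) * r).
  { unfold X.
    pose proof (Rabs_triang (A*(e-c) + A*(a-c) + (b-c)) (dd-c)).
    pose proof (Rabs_triang (A*(e-c) + A*(a-c)) (b-c)).
    pose proof (Rabs_triang (A*(e-c)) (A*(a-c))).
    rewrite !Rabs_mult in *.
    assert (Rabs (e-c) < 4*r) by (apply Rabs_def1; lra).
    assert (Rabs (a-c) < 4*r) by (apply Rabs_def1; lra).
    assert (Rabs (b-c) < 2*r) by (apply Rabs_def1; lra).
    assert (Rabs (dd-c) < 2*r) by (apply Rabs_def1; lra).
    nra. }
  assert (heq : c * (c*c + 2*eps*A) = - (eps * X)) by (unfold X; lra).
  assert (habs : Rabs c * (c*c + 2*eps*A) = Rabs eps * Rabs X).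
  { rewrite <- (Rabs_right (c*c + 2*eps*A)) at 1 by lra.
    rewrite <- !Rabs_mult, heq, Rabs_Ropp. reflexivity. }
  assert (Rabs c * (4 * Rabs eps) <= Rabs c * (c*c + 2*eps*A))
    by (apply Rmult_le_compat_l; [apply Rabs_pos|lra]).
  assert (Rabs eps * Rabs X < Rabs eps * ((8 * Rabs A + 4) * r))
    by (apply Rmult_lt_compat_l; lra).
  nra.
Qed.

Lemma le_div_mul r P X : 0 < X -> r <= P / X -> r * X <= P.
Proof.
  intros hX H. apply (Rmult_le_compat_r X) in H; [|lra].
  unfold Rdiv in H. rewrite Rmult_assoc, Rinv_l, Rmult_1_r in H; lra.
Qed.

Theorem proposition2 (eps A : R) (heps : eps <> 0) (hA : A <> 0) :
  forall q : R4, nonwandering (fmap eps A) q ->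
    in_cube (sqrt (Rabs (eps * A) * (2 + 4 / Rabs A))) q.
Proof.
  intros q Hnw. destruct q as [[[q1 q2] q3] q4].
  assert (hE : 0 < Rabs eps) by (apply Rabs_pos_lt; auto).
  assert (hB : 0 < Rabs A) by (apply Rabs_pos_lt; auto).
  set (K := Rabs (eps * A) * (2 + 4 / Rabs A)).
  assert (hK : K = Rabs eps * (2 * Rabs A + 4)).
  { unfold K. rewrite Rabs_mult. field. lra. }
  assert (hK0 : 0 < K) by (rewrite hK; nra).
  set (R0 := sqrt K).
  assert (hR0 : 0 < R0) by (apply sqrt_lt_R0; lra).
  assert (hR0K : R0 * R0 = K) by (apply sqrt_sqrt; lra).
  set (Aq := Rmax (Rabs q1) (Rabs q2)).
  set (Bq := Rmax (Rabs q3) (Rabs q4)).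
  set (m := Rmax Aq Bq).
  destruct (Rle_lt_dec m R0) as [hm|hm].
  - assert (forall x, Rabs x <= m -> - R0 <= x <= R0).
    { intros x hx. assert (Rabs x <= R0) by lra.
      pose proof (Rle_abs x). pose proof (Rle_abs (-x)) as HH. rewrite Rabs_Ropp in HH. lra. }
    pose proof (Rmax_l (Rabs q1) (Rabs q2)). pose proof (Rmax_r (Rabs q1) (Rabs q2)).
    pose proof (Rmax_l (Rabs q3) (Rabs q4)). pose proof (Rmax_r (Rabs q3) (Rabs q4)).
    pose proof (Rmax_l Aq Bq). pose proof (Rmax_r Aq Bq).
    assert (eA : Aq = Rmax (Rabs q1) (Rabs q2)) by reflexivity.
    assert (eB : Bq = Rmax (Rabs q3) (Rabs q4)) by reflexivity.
    assert (em : m = Rmax Aq Bq) by reflexivity.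
    simpl. split; [|split; [|split]]; apply H; lra.
  - exfalso.
    set (T0 := (m + R0) / 2).
    set (P := T0 * (T0^2 - K)).
    assert (hT0 : R0 < T0) by (unfold T0; lra).
    assert (hTT : R0 * R0 < T0 * T0) by nra.
    assert (hP : 0 < P).
    { assert (eP : P = T0 * (T0^2 - K)) by reflexivity. rewrite eP.
      apply Rmult_lt_0_compat; [lra|]. simpl. lra. }
    set (r := Rmin (Rmin ((m - R0)/3) (R0 / (2 * Rabs A + 1))) (P / (6 * Rabs eps * (Rabs A + 1)))).
    assert (hr0 : 0 < r).
    { unfold r. repeat apply Rmin_glb_lt; apply Rdiv_lt_0_compat; nra. }
    assert (hr1 : 3 * r <= m - R0).
    { assert (r <= (m - R0)/3) by (unfold r; eapply Rle_trans; [apply Rmin_l|apply Rmin_l]). lra. }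
    assert (hr2 : r * (2 * Rabs A + 1) <= R0).
    { apply le_div_mul; [lra|]. unfold r; eapply Rle_trans; [apply Rmin_l|apply Rmin_r]. }
    assert (hr3 : r * (6 * Rabs eps * (Rabs A + 1)) <= P).
    { apply le_div_mul; [nra|]. unfold r; apply Rmin_r. }
    assert (G : good eps A K T0 (3*r) (3*r)).
    { assert (eP : P = T0 * (T0^2 - K)) by reflexivity.
      unfold good. repeat split; auto; try lra; try (rewrite <- eP; nra); try (simpl; nra). }
    destruct (Hnw (fun p => dist4 p (q1,q2,q3,q4) < r)) as (k & hk & p & hp & hpk).
    { exists r. split; auto. }
    destruct k as [|[|k]]; [lia| |].
    + apply (near_fixed eps A K R0 m p q1 q2 q3 q4 r heps hA hK ltac:(lra) hR0K hr1 hr2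
        ltac:(reflexivity) hp hpk).
    + pose proof (close_ApMp _ _ _ _ _ _ hp) as (a1&a2&a3&a4).
      pose proof (close_ApMp _ _ _ _ _ _ hpk) as (b1&b2&b3&b4).
      fold Aq Bq in a1, a2, a3, a4, b1, b2, b3, b4.
      destruct (Rle_lt_dec Aq Bq) as [hab|hab].
      * assert (m = Bq) by (unfold m; apply Rmax_right; lra).
        assert (Hf T0 (3*r) p) by (unfold Hf; unfold T0; split; lra).
        pose proof (fwd_strict eps A K T0 (3*r) (3*r) p G H0 k). lra.
      * assert (m = Aq) by (unfold m; apply Rmax_left; lra).
        assert (Hb T0 (3*r) (iter4 (fmap eps A) (S (S k)) p)) by (unfold Hb; unfold T0; split; lra).
        pose proof (bwd_strict eps A K T0 (3*r) (3*r) p G k H0). lra.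
Qed.
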